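(* Let $n\ge2$. The word $K_n$ has exactly $2\cdot4^{n-2}-1$ letters, and its letter in position $j$ ($1\le j\le 2\cdot 4^{n-2}-1$) is: (a) $P$ exactly when $j=2k-1$, $k=1,\dots,4^{n-2}$; (b) $T$ exactly when $j=4^{2l-1}(2k-1)$ with $l=1,\dots,\lfloor\frac{n-1}{2}\rfloor$, $k=1,\dots,4^{\,n-2l-1}$; (c) $V$ exactly when $j=4^{2l}(2k-1)$ with $l=1,\dots,\lfloor\frac{n-2}{2}\rfloor$, $k=1,\dots,4^{\,n-2l-2}$; (d) $S$ exactly when $j=4^{2l-2}(8k-6)$ with $l=1,\dots,\lfloor\frac{n-1}{2}\rfloor$, $k=1,\dots,4^{\,n-2l-1}$, or $j=4^{2l-1}(8k-2)$ with $l=1,\dots,\lfloor\frac{n-2}{2}\rfloor$, $k=1,\dots,4^{\,n-2l-2}$; (e) $U$ exactly when $j=4^{2l-2}(8k-2)$ with $l=1,\dots,\lfloor\frac{n-1}{2}\rfloor$, $k=1,\dots,4^{\,n-2l-1}$, or $j=4^{2l-1}(8k-6)$ with $l=1,\dots,\lfloor\frac{n-2}{2}\rfloor$, $k=1,\dots,4^{\,n-2l-2}$. Moreover, if $n=2m$ then $K_n$ contains $4^{2m-2}$ letters $P$, $\frac{4^{2m-2}-1}{15}$ letters $V$, $\frac{4^{2m-1}-4}{15}$ letters $T$, $\frac{4^{2m-2}-1}{3}$ letters $S$ and $\frac{4^{2m-2}-1}{3}$ letters $U$; if $n=2m+1$ then it contains $4^{2m-1}$ letters $P$, $\frac{4^{2m-1}-4}{15}$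 letters $V$, $\frac{4^{2m}-1}{15}$ letters $T$, $\frac{4^{2m-1}-1}{3}$ letters $S$ and $\frac{4^{2m-1}-1}{3}$ letters $U$.
   Context: Words $K_n$ ($n\ge2$) over the alphabet $\{P,S,T,U,V\}$ are defined by $K_2=P$; $K_{2m+1}=K_{2m}\,S\,K_{2m}\,T\,K_{2m}\,U\,K_{2m}$ for $m\ge1$; $K_{2m}=K_{2m-1}\,U\,K_{2m-1}\,V\,K_{2m-1}\,S\,K_{2m-1}$ for $m\ge2$ (juxtaposition is concatenation; e.g. $K_3=PSPTPUP$). (In the paper these letters encode blocks of affine curvatures of the Hilbert curve: $P=(-2,1,\tfrac12,-1,1,-1,2,1,-\tfrac12)$, $S=(2,1,-\tfrac12,1)$, $T=(3,1,\tfrac13)$, $U=(1,-2,1,\tfrac12)$, $V=(1,-1,1,-1,1)$, and the curvature sequence of the Hilbert curve at step $n$ is $1,K_n,1$.) $\lfloor x\rfloor$ denotes the greatest integer $\le x$. *)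

(* Defs.v *)
From HB Require Import structures.
From mathcomp Require Import all_boot.
Set Implicit Arguments. Unset Strict Implicit. Unset Printing Implicit Defensive.

Inductive letter := LP | LS | LT | LU | LV.

Definition letter_eqb (a b : letter) : bool :=
  match a, b with
  | LP, LP | LS, LS | LT, LT | LU, LU | LV, LV => true
  | _, _ => false
  end.

Lemma letter_eqP : Equality.axiom letter_eqb.
Proof. by case; case; constructor. Qed.

HB.instance Definition _ := hasDecEq.Build letter letter_eqP.

(* K n for n >= 2 (values for n < 2 are irrelevant junk):
   K 2 = P; K (2m+1) = K(2m) S K(2m) T K(2m) U K(2m);
   K (2m) = K(2m-1) U K(2m-1) V K(2m-1) S K(2m-1). *)
Fixpoint K (n : nat) : seq letter :=
  match n with
  | 0 | 1 | 2 => [:: LP]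
  | n'.+1 =>
      let w := K n' in
      if odd n'.+1 then w ++ LS :: w ++ LT :: w ++ LU :: w
      else w ++ LU :: w ++ LV :: w ++ LS :: w
  end.

(* letter of K n at 1-based position j *)
Definition letter_at (n j : nat) : letter := nth LP (K n) j.-1.

(* Main.v *)
Require Import Defs.
From HB Require Import structures.
From mathcomp Require Import all_boot zify.

Definition base v o := if v == 0 then LP else if v %% 4 == 2 then LT
  else if v %% 4 == 0 then LV else if (v %% 4 == 1) == (o %% 4 == 1) then LS else LU.

Lemma baseP_inv v o : base v o = LP -> v = 0.
Proof. rewrite /base; case: eqP => // _; repeat case: ifP => //. Qed.
Lemma baseT_inv v o : base v o = LT -> v %% 4 = 2.
Proof. rewrite /base; case: eqP => // _; case: eqP => //; repeat case: ifP => //. Qed.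
Lemma baseV_inv v o : base v o = LV -> 0 < v /\ v %% 4 = 0.
Proof. rewrite /base; case: eqP => // H0; case: eqP => // _; case: eqP => // H; [lia|]; repeat case: ifP => //. Qed.
Lemma baseS_inv v o : odd o -> base v o = LS ->
  (v %% 4 = 1 /\ o %% 4 = 1) \/ (v %% 4 = 3 /\ o %% 4 = 3).
Proof. move=> Ho; rewrite /base; case: eqP => // H0; case: eqP => // H2; case: eqP => // H4.
case: (v %% 4 =P 1); case: (o %% 4 =P 1) => //= *; lia. Qed.
Lemma baseU_inv v o : odd o -> base v o = LU ->
  (v %% 4 = 1 /\ o %% 4 = 3) \/ (v %% 4 = 3 /\ o %% 4 = 1).
Proof. move=> Ho; rewrite /base; case: eqP => // H0; case: eqP => // H2; case: eqP => // H4.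
case: (v %% 4 =P 1); case: (o %% 4 =P 1) => //= *; lia. Qed.

Lemma baseP v o : v = 0 -> base v o = LP. Proof. by move=> ->. Qed.
Lemma baseT v o : v %% 4 = 2 -> base v o = LT.
Proof. move=> H; rewrite /base H; case: eqP => // H0; lia. Qed.
Lemma baseV v o : 0 < v -> v %% 4 = 0 -> base v o = LV.
Proof. move=> H1 H; rewrite /base H; case: eqP => // H0; lia. Qed.
Lemma baseS v o : (v %% 4 = 1 /\ o %% 4 = 1) \/ (v %% 4 = 3 /\ o %% 4 = 3) -> base v o = LS.
Proof. case=> [[H1 H2]|[H1 H2]]; rewrite /base H1 H2; case: eqP => // H0; lia. Qed.
Lemma baseU v o : (v %% 4 = 1 /\ o %% 4 = 3) \/ (v %% 4 = 3 /\ o %% 4 = 1) -> base v o = LU.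
Proof. case=> [[H1 H2]|[H1 H2]]; rewrite /base H1 H2; case: eqP => // H0; lia. Qed.

Lemma base_same v o o' : (v %% 2 = 0 \/ o %% 4 = o' %% 4) -> base v o = base v o'.
Proof. case=> H; last by rewrite /base H.
rewrite /base; case: eqP => // H0; case: eqP => // H1; case: eqP => // H2; exfalso; lia. Qed.

Lemma pow_eq x y c : x = 2 * y + c -> 2 ^ x = 2 ^ c * 4 ^ y.
Proof. by move=> ->; rewrite expnD mulnC expnM. Qed.

Lemma Kstep p : K p.+3 =
  if odd p.+3 then K p.+2 ++ LS :: K p.+2 ++ LT :: K p.+2 ++ LU :: K p.+2
  else K p.+2 ++ LU :: K p.+2 ++ LV :: K p.+2 ++ LS :: K p.+2.
Proof. reflexivity. Qed.

Lemma nthA (w t : seq letter) s : s < size w -> nth LP (w ++ t) s = nth LP w s.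
Proof. by move=> H; rewrite nth_cat H. Qed.
Lemma nthB (w t : seq letter) c i : nth LP (w ++ c :: t) (size w + i.+1) = nth LP t i.
Proof. rewrite nth_cat ifF; last by lia. by rewrite (_ : size w + i.+1 - size w = i.+1) //; lia. Qed.
Lemma nthC (w t : seq letter) c : nth LP (w ++ c :: t) (size w) = c.
Proof. by rewrite nth_cat ltnn subnn. Qed.

Lemma nth4 (w : seq letter) c1 c2 c3 q s : q <= 3 -> s < size w ->
  nth LP (w ++ c1 :: w ++ c2 :: w ++ c3 :: w) (q * (size w).+1 + s) = nth LP w s.
Proof.
move=> Hq Hs; case: q Hq => [|[|[|[|q]]]] // _.
- by rewrite nthA.
- by rewrite (_ : _ + s = size w + s.+1) ?nthB ?nthA //; lia.
- by rewrite (_ : _ + s = size w + (size w + s.+1).+1) ?nthB ?nthA //; lia.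
- by rewrite (_ : _ + s = size w + (size w + (size w + s.+1).+1).+1) ?nthB //; lia.
Qed.

Lemma sizeKS p : size (K p.+3) = 4 * size (K p.+2) + 3.
Proof. rewrite Kstep; case: ifP => _; move: (K p.+2) => w; rewrite !size_cat /= !size_cat /= !size_cat /=; lia. Qed.

Lemma sizeK p : (size (K p.+2)).+1 = 2 ^ (2 * p + 1).
Proof.
elim: p => [//|p IH]; rewrite sizeKS (_ : 2 * p.+1 + 1 = (2 * p + 1) + 2); last lia. rewrite expnD -IH (_ : 2 ^ 2 = 4) //; lia.
Qed.

Lemma uniq2 v v' o o' : odd o -> odd o' -> 2 ^ v * o = 2 ^ v' * o' -> v = v' /\ o = o'.
Proof.
elim: v v' => [|v IH] [|v'] Ho Ho'.
- by rewrite !mul1n.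
- by rewrite mul1n => E; move: Ho; rewrite E oddM oddX.
- by rewrite mul1n => E; move: Ho'; rewrite -E oddM oddX.
- rewrite !expnS -!mulnA => E.
  have [-> ->] : v = v' /\ o = o' by apply: IH => //; lia.
  by [].
Qed.

Lemma decomp j : 0 < j -> exists v o, odd o /\ j = 2 ^ v * o.
Proof.
elim: j {-2}j (leqnn j) => [|N IH] j Hj Hpos; first lia.
case Ho: (odd j); first by exists 0, j; rewrite mul1n.
have [v [o [H1 H2]]] : exists v o, odd o /\ j./2 = 2 ^ v * o.
  apply: IH; lia.
exists v.+1, o; split => //. rewrite expnS -mulnA -H2; lia.
Qed.

Lemma pieces M j : 0 < j -> j < 4 * M ->
  (exists q r, q <= 3 /\ 0 < r < M /\ j = q * M + r) \/ j = M \/ j = 2 * M \/ j = 3 * M.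
Proof.
move=> H0 H1.
have [a|a] := ltnP j M; first by left; exists 0, j; lia.
have [b|b] := ltnP M j; last by right; left; lia.
have [c|c] := ltnP j (2 * M); first by left; exists 1, (j - M); lia.
have [d|d] := ltnP (2 * M) j; last by right; right; left; lia.
have [f|f] := ltnP j (3 * M); first by left; exists 2, (j - 2 * M); lia.
have [g|g] := ltnP (3 * M) j; last by right; right; right; lia.
by left; exists 3, (j - 3 * M); lia.
Qed.

Lemma nthq p q s : q <= 3 -> s < size (K p.+2) ->
  nth LP (K p.+3) (q * (size (K p.+2)).+1 + s) = nth LP (K p.+2) s.
Proof. move=> Hq Hs; rewrite Kstep; case: ifP => _; exact: nth4. Qed.

Lemma nth1 p : nth LP (K p.+3) (size (K p.+2)) = if odd p.+3 then LS else LU.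
Proof. rewrite Kstep; case: ifP => _; exact: nthC. Qed.
Lemma nth2 p : nth LP (K p.+3) (size (K p.+2) + (size (K p.+2)).+1) = if odd p.+3 then LT else LV.
Proof. rewrite Kstep; case: ifP => _; by rewrite nthB nthC. Qed.
Lemma nth3 p : nth LP (K p.+3) (size (K p.+2) + (size (K p.+2) + (size (K p.+2)).+1).+1) = if odd p.+3 then LU else LS.
Proof. rewrite Kstep; case: ifP => _; by rewrite !nthB nthC. Qed.

Lemma pos p : forall v o, odd o -> 0 < 2 ^ v * o <= size (K p.+2) ->
  letter_at p.+2 (2 ^ v * o) = base v o.
Proof.
elim: p => [|p IH] v o Ho Hj.
  case: v Hj => [|v] /=.
    rewrite mul1n => Hj; have -> : o = 1 by lia. by [].
  rewrite expnS => Hj; have := expn_gt0 2 v; lia.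
have HM := sizeK p; have HS := sizeKS p.
set L := size (K p.+2) in HM HS IH.
set e := 2 * p + 1 in HM.
have Hv0 := expn_gt0 2 v.
have [[q [r [Hq [Hr Ej]]]]|[Ej|[Ej|Ej]]] := pieces L.+1 (2 ^ v * o) (ltac:(lia)) (ltac:(lia)).
- rewrite /letter_at (_ : (2 ^ v * o).-1 = q * L.+1 + (r - 1)); last by lia.
  rewrite nthq; [|lia|lia].
  have Hve : v < e.
    case: (ltnP v e) => // Hev.
    have E2 : 2 ^ v = 2 ^ e * 2 ^ (v - e) by rewrite -expnD subnKC.
    move: Ej; rewrite E2 -HM -mulnA; set Z := 2 ^ (v - e) * o => Ej.
    exfalso; set M := L.+1 in Ej Hr; have HMp : 0 < M by [].
    case: (leqP Z q) => h.
      have := h; rewrite -(leq_pmul2l HMp) mulnC => h2; lia.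
    have := h; rewrite -(leq_pmul2l HMp) mulnS => h2; lia.
  have E2 : 2 ^ e = 2 ^ v * 2 ^ (e - v) by rewrite -expnD subnKC // ltnW.
  move: Ej; rewrite HM E2; set Y := 2 ^ (e - v) => Ej.
  rewrite mulnCA in Ej.
  have Hoq : q * Y < o.
    case: (ltnP (q * Y) o) => // h; exfalso.
    have := h; rewrite -(leq_pmul2l Hv0) => h2; lia.
  have Hr' : r = 2 ^ v * (o - q * Y) by rewrite mulnBr; lia.
  have EY : Y = 2 * 2 ^ (e - v - 1) by rewrite /Y -expnS; congr (2 ^ _); lia.
  have Ho' : odd (o - q * Y) by move: EY; set Z := 2 ^ (e - v - 1); lia.
  have -> : base v o = base v (o - q * Y).
    apply: base_same.
    case: (boolP (odd v)) => Hodd; last by left; lia.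
    right.
    have EY4 : Y = 4 * 2 ^ (e - v - 2).
      have Ed : e - v = (e - v - 2).+2 by lia.
      by rewrite /Y {1}Ed !expnS mulnA.
    move: Hoq; rewrite EY4; set Z := 2 ^ (e - v - 2) => Hoq; lia.
  rewrite -IH //; last by rewrite -Hr'; lia.
  by rewrite -Hr' /letter_at subn1.
- have [-> ->] : v = e /\ o = 1 by apply: uniq2 => //; rewrite muln1 Ej.
  rewrite /letter_at (_ : (2 ^ e * 1).-1 = L); last by rewrite muln1; lia.
  rewrite nth1 /=; case Hp: (odd p) => /=; symmetry; first [apply: baseS; lia | apply: baseU; lia].
- have [-> ->] : v = e.+1 /\ o = 1 by apply: uniq2 => //; rewrite muln1 Ej expnS HM.
  rewrite /letter_at (_ : (2 ^ e.+1 * 1).-1 = L + L.+1); last by rewrite muln1 expnS; lia.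
  rewrite nth2 /=; case Hp: (odd p) => /=; symmetry; first [apply: baseV; lia | apply: baseT; lia].
- have [-> ->] : v = e /\ o = 3 by apply: uniq2 => //; rewrite Ej HM mulnC.
  rewrite /letter_at (_ : (2 ^ e * 3).-1 = L + (L + L.+1).+1); last by lia.
  rewrite nth3 /=; case Hp: (odd p) => /=; symmetry; first [apply: baseS; lia | apply: baseU; lia].
Qed.

Lemma e4 A : 2 ^ (2 * A) = 4 ^ A. Proof. by rewrite expnM. Qed.
Lemma rep A B : 2 ^ (2 * A + 1) * B = 4 ^ A * (2 * B).
Proof. rewrite addn1 expnS e4; lia. Qed.

Lemma bnd v o e : 2 ^ v * o < 2 ^ e -> 0 < o -> v < e /\ o < 2 ^ (e - v).
Proof.
move=> H Ho; case: (ltnP v e) => h.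
  split => //; move: H; rewrite (_ : 2 ^ e = 2 ^ v * 2 ^ (e - v)).
    by rewrite ltn_pmul2l // expn_gt0.
  by rewrite -expnD subnKC // ltnW.
exfalso; have h1 := leq_pexp2l (isT : 0 < 2) h.
have h2 := leq_pmulr (2 ^ v) Ho; lia.
Qed.

Lemma FT p v o : v %% 4 = 2 -> odd o -> 2 ^ v * o < 2 ^ (2 * p + 1) ->
  exists l k, 1 <= l <= (p.+2 - 1)./2 /\ 1 <= k <= 4 ^ (p.+2 - 2 * l - 1) /\
              2 ^ v * o = 4 ^ (2 * l - 1) * (2 * k - 1).
Proof.
move=> Hv Ho Hb; have [Hve Hov] := @bnd _ _ _ Hb (ltac:(lia)).
have [l [El Hl]] : exists l, v = 2 * (2 * l - 1) /\ 1 <= l by exists ((v + 2) %/ 4); lia.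
have [k [Ek Hk]] : exists k, o = 2 * k - 1 /\ 1 <= k by exists ((o + 1) %/ 2); lia.
exists l, k; subst v o; rewrite e4; split; first lia; split => //.
rewrite (@pow_eq _ (p.+2 - 2 * l - 1) 1) in Hov; last lia.
rewrite expn1 in Hov; lia.
Qed.

Lemma FV p v o : v %% 4 = 0 -> 0 < v -> odd o -> 2 ^ v * o < 2 ^ (2 * p + 1) ->
  exists l k, 1 <= l <= p./2 /\ 1 <= k <= 4 ^ (p.+2 - 2 * l - 2) /\
              2 ^ v * o = 4 ^ (2 * l) * (2 * k - 1).
Proof.
move=> Hv Hv0 Ho Hb; have [Hve Hov] := @bnd _ _ _ Hb (ltac:(lia)).
have [l [El Hl]] : exists l, v = 2 * (2 * l) /\ 1 <= l by exists (v %/ 4); lia.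
have [k [Ek Hk]] : exists k, o = 2 * k - 1 /\ 1 <= k by exists ((o + 1) %/ 2); lia.
exists l, k; subst v o; rewrite e4; split; first lia; split => //.
rewrite (@pow_eq _ (p.+2 - 2 * l - 2) 1) in Hov; last lia.
rewrite expn1 in Hov; lia.
Qed.

Lemma F1 p v o d : v %% 4 = 1 -> (o + d) %% 4 = 0 -> d < 4 -> odd o -> 2 ^ v * o < 2 ^ (2 * p + 1) ->
  exists l k, 1 <= l <= (p.+2 - 1)./2 /\ 1 <= k <= 4 ^ (p.+2 - 2 * l - 1) /\
              2 ^ v * o = 4 ^ (2 * l - 2) * (8 * k - 2 * d).
Proof.
move=> Hv Hod Hd Ho Hb; have [Hve Hov] := @bnd _ _ _ Hb (ltac:(lia)).
have [l [El Hl]] : exists l, v = 2 * (2 * l - 2) + 1 /\ 1 <= l by exists ((v + 3) %/ 4); lia.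
have [k [Ek Hk]] : exists k, o = 4 * k - d /\ 1 <= k by exists ((o + d) %/ 4); lia.
exists l, k; subst v; rewrite rep; split; first lia; split; last by congr (_ * _); lia.
rewrite (@pow_eq _ (p.+2 - 2 * l - 1) 2) in Hov; last lia.
rewrite (_ : 2 ^ 2 = 4) // in Hov; lia.
Qed.

Lemma F3 p v o d : v %% 4 = 3 -> (o + d) %% 4 = 0 -> d < 4 -> odd o -> 2 ^ v * o < 2 ^ (2 * p + 1) ->
  exists l k, 1 <= l <= p./2 /\ 1 <= k <= 4 ^ (p.+2 - 2 * l - 2) /\
              2 ^ v * o = 4 ^ (2 * l - 1) * (8 * k - 2 * d).
Proof.
move=> Hv Hod Hd Ho Hb; have [Hve Hov] := @bnd _ _ _ Hb (ltac:(lia)).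
have [l [El Hl]] : exists l, v = 2 * (2 * l - 1) + 1 /\ 1 <= l by exists ((v + 1) %/ 4); lia.
have [k [Ek Hk]] : exists k, o = 4 * k - d /\ 1 <= k by exists ((o + d) %/ 4); lia.
exists l, k; subst v; rewrite rep; split; first lia; split; last by congr (_ * _); lia.
rewrite (@pow_eq _ (p.+2 - 2 * l - 2) 2) in Hov; last lia.
rewrite (_ : 2 ^ 2 = 4) // in Hov; lia.
Qed.

Lemma counts p : [/\ count_mem LP (K p.+2) = 4 ^ p,
  3 * count_mem LS (K p.+2) = 4 ^ p - 1, 3 * count_mem LU (K p.+2) = 4 ^ p - 1,
  15 * count_mem LV (K p.+2) = (if odd p then 4 ^ p - 4 else 4 ^ p - 1)
  & 15 * count_mem LT (K p.+2) = (if odd p then 4 * 4 ^ p - 1 else 4 * 4 ^ p - 4)].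
Proof.
elim: p => [//|p [IH1 IH2 IH3 IH4 IH5]].
have X1 : 1 <= 4 ^ p by rewrite expn_gt0.
have X4 : 4 <= 4 * 4 ^ p by lia.
rewrite Kstep expnS.
have -> : odd p.+3 = odd p.+1 by rewrite /=; case: (odd p).
move: IH1 IH2 IH3 IH4 IH5 X4; move: (K p.+2) => w.
rewrite /=; case Hp: (odd p) => /= IH1 IH2 IH3 IH4 IH5 X4;
rewrite !count_cat /= !count_cat /= !count_cat /=; split; lia.
Qed.

Lemma back A B v o : odd B -> odd o -> 4 ^ A * (2 * B) = 2 ^ v * o -> v = 2 * A + 1 /\ o = B.
Proof. move=> HB Ho; rewrite -rep => E; have [-> ->] := @uniq2 _ _ _ _ HB Ho E; by []. Qed.
Lemma back0 A B v o : odd B -> odd o -> 4 ^ A * B = 2 ^ v * o -> v = 2 * A /\ o = B.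
Proof. move=> HB Ho; rewrite -e4 => E; have [-> ->] := @uniq2 _ _ _ _ HB Ho E; by []. Qed.

Theorem mainTheorem12 (n : nat) (hn : 2 <= n) :
  size (K n) = 2 * 4 ^ (n - 2) - 1 /\
  (forall j, 1 <= j <= 2 * 4 ^ (n - 2) - 1 ->
    [/\ letter_at n j = LP <->
          (exists k, 1 <= k <= 4 ^ (n - 2) /\ j = 2 * k - 1),
        letter_at n j = LT <->
          (exists l k, 1 <= l <= (n - 1)./2 /\ 1 <= k <= 4 ^ (n - 2 * l - 1) /\
                       j = 4 ^ (2 * l - 1) * (2 * k - 1)),
        letter_at n j = LV <->
          (exists l k, 1 <= l <= (n - 2)./2 /\ 1 <= k <= 4 ^ (n - 2 * l - 2) /\
                       j = 4 ^ (2 * l) * (2 * k - 1)),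
        letter_at n j = LS <->
          ((exists l k, 1 <= l <= (n - 1)./2 /\ 1 <= k <= 4 ^ (n - 2 * l - 1) /\
                        j = 4 ^ (2 * l - 2) * (8 * k - 6)) \/
           (exists l k, 1 <= l <= (n - 2)./2 /\ 1 <= k <= 4 ^ (n - 2 * l - 2) /\
                        j = 4 ^ (2 * l - 1) * (8 * k - 2)))
      & letter_at n j = LU <->
          ((exists l k, 1 <= l <= (n - 1)./2 /\ 1 <= k <= 4 ^ (n - 2 * l - 1) /\
                        j = 4 ^ (2 * l - 2) * (8 * k - 2)) \/
           (exists l k, 1 <= l <= (n - 2)./2 /\ 1 <= k <= 4 ^ (n - 2 * l - 2) /\
                        j = 4 ^ (2 * l - 1) * (8 * k - 6)))]) /\
  (forall m, n = 2 * m ->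
    [/\ count_mem LP (K n) = 4 ^ (2 * m - 2),
        15 * count_mem LV (K n) = 4 ^ (2 * m - 2) - 1,
        15 * count_mem LT (K n) = 4 ^ (2 * m - 1) - 4,
        3 * count_mem LS (K n) = 4 ^ (2 * m - 2) - 1
      & 3 * count_mem LU (K n) = 4 ^ (2 * m - 2) - 1]) /\
  (forall m, n = 2 * m + 1 ->
    [/\ count_mem LP (K n) = 4 ^ (2 * m - 1),
        15 * count_mem LV (K n) = 4 ^ (2 * m - 1) - 4,
        15 * count_mem LT (K n) = 4 ^ (2 * m) - 1,
        3 * count_mem LS (K n) = 4 ^ (2 * m - 1) - 1
      & 3 * count_mem LU (K n) = 4 ^ (2 * m - 1) - 1]).
Proof.
case: n hn => [|[|p]] // _.
have E21 : 2 ^ (2 * p + 1) = 2 * 4 ^ p by rewrite (@pow_eq _ p 1) // expn1.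
have Hs : size (K p.+2) = 2 * 4 ^ p - 1 by have := sizeK p; lia.
have X1 : 0 < 4 ^ p by rewrite expn_gt0.
rewrite (_ : p.+2 - 2 = p); last lia.
split; first exact Hs.
split.
  move=> j Hj.
  have [v [o [Ho Ej]]] := @decomp _ (ltac:(lia) : 0 < j).
  have Hl : letter_at p.+2 j = base v o by rewrite Ej pos //; rewrite -Ej; lia.
  have Hb : 2 ^ v * o < 2 ^ (2 * p + 1) by rewrite -Ej E21; lia.
  rewrite Hl; split.
  - split.
      move/baseP_inv => Hv; subst v; rewrite expn0 mul1n in Ej.
      by exists ((o + 1) %/ 2); lia.
    case=> k [Hk Ej'].
    have Ej2 : 2 ^ 0 * (2 * k - 1) = 2 ^ v * o by rewrite expn0 mul1n -Ej' Ej.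
    have [Ev _] := @uniq2 _ _ _ _ (ltac:(lia) : odd (2 * k - 1)) Ho Ej2.
    by apply: baseP.
  - split.
      move/baseT_inv => Hv; have [l [k [H1 [H2 H3]]]] := @FT _ _ _ Hv Ho Hb.
      by exists l, k; rewrite Ej.
    case=> l [k [H1 [H2 Ej']]]; rewrite Ej' in Ej.
    have [Ev Eo] := @back0 _ _ _ _ (ltac:(lia) : odd (2 * k - 1)) Ho Ej.
    apply: baseT; lia.
  - split.
      move/baseV_inv => [Hv0 Hv]; have [l [k [H1 [H2 H3]]]] := @FV _ _ _ Hv Hv0 Ho Hb.
      by exists l, k; rewrite Ej.
    case=> l [k [H1 [H2 Ej']]]; rewrite Ej' in Ej.
    have [Ev Eo] := @back0 _ _ _ _ (ltac:(lia) : odd (2 * k - 1)) Ho Ej.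
    apply: baseV; lia.
  - split.
      move/(@baseS_inv _ _ Ho) => [[H1 H2]|[H1 H2]].
        have [l [k [H3 [H4 H5]]]] := @F1 p v o 3 H1 (ltac:(lia)) (isT) Ho Hb.
        by left; exists l, k; rewrite Ej H5.
      have [l [k [H3 [H4 H5]]]] := @F3 p v o 1 H1 (ltac:(lia)) (isT) Ho Hb.
      by right; exists l, k; rewrite Ej H5.
    case=> [[l [k [H1 [H2 Ej']]]]|[l [k [H1 [H2 Ej']]]]]; rewrite Ej' in Ej.
      rewrite (_ : 8 * k - 6 = 2 * (4 * k - 3)) in Ej; last lia.
      have [Ev Eo] := @back _ _ _ _ (ltac:(lia) : odd (4 * k - 3)) Ho Ej.
      apply: baseS; lia.
    rewrite (_ : 8 * k - 2 = 2 * (4 * k - 1)) in Ej; last lia.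
    have [Ev Eo] := @back _ _ _ _ (ltac:(lia) : odd (4 * k - 1)) Ho Ej.
    apply: baseS; lia.
  - split.
      move/(@baseU_inv _ _ Ho) => [[H1 H2]|[H1 H2]].
        have [l [k [H3 [H4 H5]]]] := @F1 p v o 1 H1 (ltac:(lia)) (isT) Ho Hb.
        by left; exists l, k; rewrite Ej H5.
      have [l [k [H3 [H4 H5]]]] := @F3 p v o 3 H1 (ltac:(lia)) (isT) Ho Hb.
      by right; exists l, k; rewrite Ej H5.
    case=> [[l [k [H1 [H2 Ej']]]]|[l [k [H1 [H2 Ej']]]]]; rewrite Ej' in Ej.
      rewrite (_ : 8 * k - 2 = 2 * (4 * k - 1)) in Ej; last lia.
      have [Ev Eo] := @back _ _ _ _ (ltac:(lia) : odd (4 * k - 1)) Ho Ej.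
      apply: baseU; lia.
    rewrite (_ : 8 * k - 6 = 2 * (4 * k - 3)) in Ej; last lia.
    have [Ev Eo] := @back _ _ _ _ (ltac:(lia) : odd (4 * k - 3)) Ho Ej.
    apply: baseU; lia.
have [C1 C2 C3 C4 C5] := counts p.
split.
  move=> m Hm.
  have Hp : odd p = false by lia.
  rewrite Hp in C4 C5.
  rewrite (_ : 2 * m - 2 = p); last lia.
  rewrite (_ : 2 * m - 1 = p.+1); last lia.
  rewrite expnS; split; lia.
move=> m Hm.
have Hp : odd p = true by lia.
rewrite Hp in C4 C5.
rewrite (_ : 2 * m - 1 = p); last lia.
rewrite (_ : 2 * m = p.+1); last lia.
rewrite expnS; split; lia.
Qed.
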